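(* Let $N,W$ be positive integers and let $P$ be a nonzero polynomial of degree at most $N$ with integer coefficients of absolute value at most $W$. If $1$ is a root of $P$ of order $k$, then \[k\le\left\lfloor\frac{16}{7}W^{1/4}\sqrt{N}\right\rfloor+4.\]
   Context: A number $\alpha$ is a root of $P$ of order $k$ if $P(x)=Q(x)(x-\alpha)^k$ for some polynomial $Q$ with $Q(\alpha)\neq0$. *)

(* Defs.v *)
From HB Require Import structures.
From mathcomp Require Import all_boot all_order all_algebra.
From mathcomp Require Import reals.
Set Implicit Arguments. Unset Strict Implicit. Unset Printing Implicit Defensive.
Import Order.TTheory GRing.Theory Num.Theory.
Local Open Scope ring_scope.

Definition root_of_order {R : nzRingType} (P : {poly R}) (alpha : R) (k : nat) : Prop :=
  exists Q : {poly R}, P = Q * ('X - alpha%:P) ^+ k /\ Q.[alpha] != 0.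

(* Main.v *)
Require Import Defs.
From HB Require Import structures.
From mathcomp Require Import all_boot all_order all_algebra.
From mathcomp Require Import reals.
From mathcomp Require Import ring lra zify.
Import Order.TTheory GRing.Theory Num.Theory.
Local Open Scope ring_scope.

Section S.
Variable R : realType.

Fixpoint TA (n : nat) : {poly R} * {poly R} :=
  match n with
  | 0 => (1, 0)
  | n'.+1 => ('X * (TA n').1 - (1 - 'X ^+ 2) * (TA n').2, (TA n').1 + 'X * (TA n').2)
  end.

Fixpoint FF (n : nat) : {poly R} :=
  match n with
  | 0 => 0
  | n'.+1 => FF n' + (TA n').1 + (1 + 'X) * (TA n').2
  end.

Lemma pell n : (TA n).1 ^+ 2 + (1 - 'X ^+ 2) * (TA n).2 ^+ 2 = 1.
Proof.
elim: n => [|n IH] /=; first by rewrite expr1n expr0n /= mulr0 addr0.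
rewrite -[RHS]IH; ring.
Qed.

Lemma FF_id n : (1 - 'X) * FF n = 1 - (TA n).1.
Proof.
elim: n => [|n IH] /=; first by rewrite mulr0 subrr.
rewrite mulrDr mulrDr IH; ring.
Qed.

Lemma TA1 n : (TA n).1.[1] = 1 /\ (TA n).2.[1] = n%:R.
Proof.
elim: n => [|n [IH1 IH2]] /=; first by rewrite hornerC horner0.
rewrite !hornerE IH1 IH2; split; [ring | rewrite mulrS; ring].
Qed.

Lemma FF1 n : (FF n).[1] = n%:R ^+ 2.
Proof.
elim: n => [|n IH] /=; first by rewrite horner0 expr0n.
have [h1 h2] := TA1 n.
rewrite !hornerE IH h1 h2 mulrS; ring.
Qed.


Lemma size_TA n : (size (TA n).1 <= n.+1)%N /\ (size (TA n).2 <= n)%N.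
Proof.
elim: n => [|n [IH1 IH2]] /=; first by rewrite size_poly1 size_poly0.
have s1m : (size (1 - 'X ^+ 2 : {poly R})%R <= 3)%N.
  by rewrite (leq_trans (size_polyD _ _)) // size_polyN size_polyXn size_poly1.
split.
- rewrite (leq_trans (size_polyD _ _)) // geq_max size_polyN; apply/andP; split.
  + rewrite (leq_trans (size_polyMleq _ _)) // size_polyX.
    by rewrite add2n.
  + rewrite (leq_trans (size_polyMleq _ _)) //.
    have h := leq_add s1m IH2; by rewrite -subn1 leq_subLR (leq_trans h) // add3n add1n.
- rewrite (leq_trans (size_polyD _ _)) // geq_max IH1 /=.
  rewrite (leq_trans (size_polyMleq _ _)) // size_polyX.
  by rewrite add2n.
Qed.

Lemma size_FF n : (size (FF n) <= n)%N.
Proof.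
elim: n => [|n IH] /=; first by rewrite size_poly0.
have [h1 h2] := size_TA n.
rewrite (leq_trans (size_polyD _ _)) // geq_max (leq_trans (size_polyD _ _)) ?geq_max ?h1 ?andbT //=.
2: exact: leq_trans IH (leqnSn n).
rewrite (leq_trans (size_polyMleq _ _)) //.
  have : (size (1 + 'X : {poly R})%R <= 2)%N.
    by rewrite (leq_trans (size_polyD _ _)) // size_poly1 size_polyX.
  move=> hs; have h := leq_add hs h2; by rewrite -subn1 leq_subLR (leq_trans h) // add2n add1n.
Qed.

Lemma Fbound m (y : R) : -1 <= y -> y < 1 -> ((FF m).[y]) ^+ 2 * (1 - y) ^+ 2 <= 4.
Proof.
move=> hy1 hy2.
have e1 := congr1 (fun p => p.[y]) (FF_id m).
have e2 := congr1 (fun p => p.[y]) (pell m).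
move: e1 e2; rewrite /= !(hornerD, hornerN, hornerM, horner_exp, hornerX, hornerC).
set f := (FF m).[y]; set t := (TA m).1.[y]; set a := (TA m).2.[y].
move=> e1 e2.
have h1 : 0 <= 1 - y * y by nra.
have h2 : 0 <= a * a by nra.
have h3 := mulr_ge0 h1 h2.
have ht : t * t <= 1 by nra.
have -> : f ^+ 2 * (1 - y) ^+ 2 = (1 - t) ^+ 2 by rewrite -e1; ring.
nra.
Qed.

Lemma diff_size (p : {poly R}) k : (size p <= k.+1)%N -> (size (p \Po ('X + 1%:P) - p)%R <= k)%N.
Proof.
move=> hp.
have s2 : size ('X + 1%:P : {poly R}) = 2 by rewrite size_XaddC.
have sc : size (p \Po ('X + 1%:P)) = size p by rewrite size_comp_poly2.
apply/leq_sizeP => j hj; rewrite coefB.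
have [hs|hs] := leqP (size p) j.
  by rewrite !nth_default ?sc // subrr.
have ej : j = (size p).-1.
  apply/eqP; rewrite eqn_leq -ltnS prednK ?hs ?(leq_ltn_trans _ hs) //=.
  by rewrite -ltnS prednK ?(leq_ltn_trans _ hs) // (leq_trans hp).
have := lead_coef_comp p (q := 'X + 1%:P); rewrite s2 => /(_ isT).
rewrite lead_coefXaddC expr1n mulr1 /lead_coef sc -ej => ->.
by rewrite subrr.
Qed.

Definition Lsum (n : nat) (A p : {poly R}) := \sum_(i < n) A`_i * p.[i%:R].

Lemma Lsum_shift n (A p : {poly R}) : (size A <= n)%N ->
  Lsum n.+1 (A * ('X - 1%:P)) p = Lsum n A (p \Po ('X + 1%:P) - p).
Proof.
move=> hA; rewrite /Lsum.
rewrite (eq_bigr (fun i : 'I_n.+1 => (A * 'X)`_i * p.[i%:R] - A`_i * p.[i%:R])); last first.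
  by move=> i _; rewrite mulrBr polyC1 mulr1 coefB mulrBl.
rewrite sumrB big_ord_recl big_ord_recr /= coefMX eqxx mul0r add0r.
rewrite (nth_default _ hA) mul0r addr0 -sumrB; apply: eq_bigr => i _.
rewrite coefMX /= hornerD hornerN horner_comp !hornerE -natr1 mulrBr.
by [].
Qed.

Lemma orth k : forall n (A p : {poly R}), (size A <= n)%N -> (size p <= k)%N ->
  Lsum (n + k) (A * ('X - 1%:P) ^+ k) p = 0.
Proof.
elim: k => [|k IH] n A p hA hp.
  move: hp; rewrite leqn0 size_poly_eq0 => /eqP ->.
  by rewrite /Lsum big1 // => i _; rewrite horner0 mulr0.
rewrite exprSr mulrA addnS Lsum_shift; last first.
  rewrite (leq_trans (size_polyMleq _ _)) // size_exp_XsubC addnS /=.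
  by rewrite leq_add2r.
by apply: IH => //; apply: diff_size.
Qed.


Definition hv (v i : nat) : R := if (v < i)%N then ((i%:R - v%:R) ^+ 2)^-1 else 0.

Lemma hv_ge0 v i : 0 <= hv v i.
Proof. by rewrite /hv; case: ifP => // _; rewrite invr_ge0 sqr_ge0. Qed.

Lemma sum_widen M j (f : nat -> R) : (forall i, 0 <= f i) ->
  \sum_(i < M) f i <= \sum_(i < M + j) f i.
Proof.
move=> hf; elim: j => [|j IH]; first by rewrite addn0.
by rewrite addnS big_ord_recr /= (le_trans IH) // lerDl.
Qed.

Lemma sum_hv0 M : \sum_(i < M.+4) hv 0 i <= 61/36 - (M.+3)%:R^-1.
Proof.
elim: M => [|M IH].
  rewrite (big_ord_recr 3) (big_ord_recr 2) (big_ord_recr 1) big_ord_recr big_ord0 /= /hv /= !subr0.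
  rewrite le_eqVlt; apply/orP; left; apply/eqP; rewrite add0r; by field.
rewrite big_ord_recr /= (le_trans (lerD IH (lexx _))) // /hv /= subr0.
set x := (M.+3)%:R : R.
have hx : 0 < x by rewrite ltr0n.
have -> : (M.+4)%:R = x + 1 by rewrite /x -natr1.
rewrite -exprVn.
set a := (x + 1)^-1; set b := x^-1.
have ha : 0 < a by rewrite /a invr_gt0; nra.
have hb : 0 < b by rewrite /b invr_gt0.
have e : b - a = a * b.
  rewrite /a /b; field; apply/andP; split; apply/lt0r_neq0 => //; nra.
nra.
Qed.

Lemma sum_hv v M : \sum_(i < M) hv v i <= 61/36.
Proof.
elim: v M => [|v IH] M.
  apply: (le_trans (sum_widen M 4 (hv 0) (hv_ge0 0))).
  rewrite addn4 (le_trans (sum_hv0 M)) //.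
  by rewrite lerBlDr lerDl invr_ge0 ler0n.
case: M => [|M]; first by rewrite big_ord0 divr_ge0.
rewrite big_ord_recl /= {1}/hv ltn0 add0r.
rewrite (le_trans _ (IH M)) // le_eqVlt; apply/orP; left; apply/eqP.
apply: eq_bigr => i _; rewrite /hv /bump /= ltnS add1n.
by rewrite -!natr1 opprD addrACA subrr addr0.
Qed.

End S.

Lemma half_ge (k : nat) : (k <= ((k.+1)./2).*2)%N.
Proof.
have := odd_double_half k.+1; have := leq_b1 (odd k.+1).
move: (odd k.+1) ((k.+1)./2) => b t; rewrite -mul2n; lia.
Qed.

Theorem lemma4p6 (R : realType) (N W : nat) (P : {poly int}) (k : nat) :
  (0 < N)%N -> (0 < W)%N ->
  P != 0 -> (size P <= N.+1)%N ->
  (forall i : nat, `|P`_i| <= W%:Z) ->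
  root_of_order P 1 k ->
  (k%:Z <= Num.floor ((16 / 7 : R) * Num.sqrt (Num.sqrt (W%:R : R)) * Num.sqrt (N%:R : R)) + 4)%R.
Proof.
move=> hN hW hP0 hsz hcoef [Q [hPQ _]].
set s := Num.sqrt (Num.sqrt (W%:R : R)) * Num.sqrt (N%:R : R).
have hs0 : 0 <= s by rewrite mulr_ge0 ?sqrtr_ge0.
have hs4 : s ^+ 4 = W%:R * N%:R ^+ 2.
  rewrite /s exprMn.
  have -> : (4 = 2 * 2)%N by [].
  rewrite !exprM !sqr_sqrtr ?sqrtr_ge0 ?ler0n //.
rewrite -mulrA -/s -lerBlDr floor_ge_int leNgt; apply/negP.
have -> : ((k%:Z - 4)%:~R : R) = k%:R - 4 by rewrite intrB.
move=> hlt.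
set m := (k.+1)./2.
have hkm : (k%:R : R) <= 2 * m%:R.
  by rewrite -natrM mul2n ler_nat half_ge.
have hms : 8 / 7 * s < m%:R by lra.
have hm4 : 4096 / 2401 * (W%:R * N%:R ^+ 2) < m%:R ^+ 4 :> R.
  rewrite -hs4.
  have := ltrXn2r 4 (mulr_ge0 (divr_ge0 (ler0n _ 8) (ler0n _ 7)) hs0) hms.
  have e : (8 / 7 * s) ^+ 4 = 4096 / 2401 * s ^+ 4 by field.
  by rewrite e.
have hk5 : (5 <= k)%N.
  have : 4 < (k%:R : R) by lra.
  by rewrite ltr_nat.
have hm2 : (2 * m <= k.+1)%N by rewrite /m mul2n halfK leq_subr.
have hm0 := half_ge k; rewrite -/m -mul2n in hm0.
clearbody m.
have hm1 : (1 <= m)%N by lia.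
set Pr := map_poly (intr : int -> R) P.
set A := map_poly (intr : int -> R) Q.
have hPr : Pr = A * ('X - 1%:P) ^+ k.
  by rewrite /Pr /A hPQ rmorphM rmorphXn /= map_polyXsubC rmorph1.
have coefPr i : Pr`_i = (P`_i)%:~R by rewrite coef_map.
have exP : exists i, P`_i != 0.
  by exists (size P).-1; rewrite -lead_coefE lead_coef_eq0.
case: (ex_minnP exP) => v hPv0 vmin.
set c : R := 2 / N%:R.
have hNR : 0 < (N%:R : R) by rewrite ltr0n.
set r : {poly R} := 1 - c *: ('X - (v%:R)%:P).
have rE y : r.[y] = 1 - c * (y - v%:R) by rewrite /r !hornerE.
set F := FF R m.
set q := (F \Po r) ^+ 2.
have qE i : q.[i%:R] = (F.[1 - c * (i%:R - v%:R)]) ^+ 2.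
  by rewrite /q horner_exp horner_comp rE.
have sr : (size r <= 2)%N.
  rewrite /r (leq_trans (size_polyD _ _)) // geq_max size_poly1 /= size_polyN.
  rewrite (leq_trans (size_scale_leq _ _)) // size_XsubC //.
have sF : (size (F \Po r) <= m)%N.
  rewrite (leq_trans (size_comp_poly_leq _ _)) //.
  have := size_FF R m; rewrite -/F => h1.
  case: (size r) sr => [|[|[|//]]] _ /=; rewrite ?muln0 ?muln1 //.
  by case: (size F) h1 => [|a] ha //=.
have sq : (size q <= k)%N.
  rewrite /q expr2 (leq_trans (size_polyMleq _ _)) //.
  have := leq_add sF sF; move: (size (F \Po r)) => a ha.
  by rewrite -subn1 leq_subLR (leq_trans ha) // add1n addnn -mul2n.
have o := @orth R k _ A q (leqnn (size A)) sq.
rewrite -hPr /Lsum in o.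
set M := (size A + k)%N in o.
have vM : (v < M)%N.
  have : (size Pr <= M)%N.
    by rewrite hPr (leq_trans (size_polyMleq _ _)) // size_exp_XsubC addnS.
  apply: leq_trans; rewrite ltnNge; apply/negP => /leq_sizeP /(_ v (leqnn v)).
  by rewrite coefPr => /eqP; rewrite intr_eq0 (negPf hPv0).
rewrite (bigD1 (Ordinal vM)) //= in o.
have qv : q.[v%:R] = m%:R ^+ 4.
  by rewrite qE subrr mulr0 subr0 FF1 -exprM.
rewrite qv in o.
have hcpos : 0 < c by rewrite /c divr_gt0 // ltr0n.
have hS : `|\sum_(i < M | i != Ordinal vM) Pr`_i * q.[i%:R]| <= W%:R * N%:R ^+ 2 * (61 / 36).
  have pw : forall i : 'I_M, i != Ordinal vM -> `|Pr`_i * q.[i%:R]| <= W%:R * N%:R ^+ 2 * hv R v i.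
    move=> i hi.
    have hiv : (i : nat) != v.
      by apply: contra hi => /eqP h; apply/eqP; apply: val_inj.
    have hWN : 0 <= W%:R * N%:R ^+ 2 * hv R v i :> R.
      by rewrite !mulr_ge0 ?ler0n ?exprn_ge0 ?ler0n ?hv_ge0.
    case: (ltngtP i v) => [hlt2|hgt|heq]; last by rewrite heq eqxx in hiv.
      have hPi : P`_i = 0.
        by apply/eqP; apply: contraTT hlt2 => /vmin; rewrite leqNgt.
      by rewrite coefPr hPi mul0r normr0.
    case: (eqVneq (P`_i) 0) => [hPi|hPi]; first by rewrite coefPr hPi mul0r normr0.
    have iN : (i <= N)%N.
      rewrite -ltnS (leq_trans _ hsz) // ltnNge; apply/negP => /leq_sizeP /(_ i (leqnn i)).
      by move/eqP; rewrite (negPf hPi).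
    have hPW : `|(P`_i)%:~R : R| <= W%:R by rewrite -intr_norm -[W%:R]/((W%:Z)%:~R) ler_int.
    set j : R := i%:R - v%:R.
    have hj0 : 0 < j by rewrite /j subr_gt0 ltr_nat.
    have hjN : j <= N%:R.
      have : (i%:R : R) <= N%:R by rewrite ler_nat.
      have : (0 : R) <= v%:R by rewrite ler0n.
      rewrite /j; lra.
    have hcj : c * j <= 2.
      by rewrite /c mulrAC ler_pdivrMr // ler_pM2l.
    have hb := Fbound R m (1 - c * j).
    have hq0 : 0 <= q.[i%:R] by rewrite qE sqr_ge0.
    rewrite normrM coefPr (ger0_norm hq0) -mulrA.
    apply: ler_pM => //.
    rewrite qE /hv hgt -/j.
    have e : (1 - (1 - c * j)) ^+ 2 = 4 * j ^+ 2 / N%:R ^+ 2.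
      by rewrite /c; field; rewrite lt0r_neq0.
    move: hb; rewrite e => hb.
    have hj2 : 0 < j ^+ 2 by apply: exprn_gt0.
    have hN2 : (0 : R) < N%:R ^+ 2 by apply: exprn_gt0.
    have hX : 0 < 4 * j ^+ 2 / N%:R ^+ 2 by apply: divr_gt0 => //; apply: mulr_gt0.
    have hcj0 : 0 < c * j by apply: mulr_gt0.
    have hb' := hb ltac:(lra) ltac:(lra).
    have e2 : N%:R ^+ 2 * (j ^+ 2)^-1 = 4 / (4 * j ^+ 2 / N%:R ^+ 2).
      by field; rewrite !lt0r_neq0.
    by rewrite e2 ler_pdivlMr.
  apply: (le_trans (ler_norm_sum _ _ _)).
  apply: (le_trans (ler_sum _ pw)).
  rewrite -mulr_sumr ler_wpM2l ?mulr_ge0 ?ler0n ?exprn_ge0 ?ler0n //.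
  apply: le_trans (sum_hv R v M).
  rewrite [X in _ <= X](bigD1 (Ordinal vM)) //= {2}/hv ltnn add0r //.
have hPv : 1 <= `|Pr`_v|.
  by rewrite coefPr -intr_norm ler1z -gtz0_ge1 normr_gt0.
move/eqP: o; rewrite addr_eq0 => /eqP o.
have : m%:R ^+ 4 <= W%:R * N%:R ^+ 2 * (61 / 36) :> R.
  apply: le_trans hS; rewrite -normrN -o normrM (ger0_norm (exprn_ge0 _ (ler0n _ _))).
  by rewrite ler_pMl ?exprn_gt0 ?ltr0n.
have hWN0 : 0 <= W%:R * N%:R ^+ 2 :> R by rewrite mulr_ge0 ?ler0n ?exprn_ge0.
lra.
Qed.
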